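(* If $C$ is a smooth cone in a finite-dimensional Euclidean space $X$, then its polar cone $C^\circ$ is also smooth.
   Context: A cone $C$ is regular if it is pointed, closed, convex, with nonempty interior. A ray is $\{\lambda x:\lambda\ge0\}$, $x\ne0$; an extreme ray of $C$ is a ray in $C$ which is a face of $C$ (a convex $\mathcal F\subset C$ such that $x,y\in C$, $\lambda x+(1-\lambda)y\in\mathcal F$ for some $0<\lambda<1$ implies $x,y\in\mathcal F$). A regular cone $C$ is smooth if every boundary point of $C$ lies on an extreme ray of $C$ and, for every non-zero point $x$ of any extreme ray, the normal cone $N_C(x)$ has dimension one. $C^\circ=\{y:\langle x,y\rangle\le0\ \forall x\in C\}$. *)

(* Defs.v *)
(* Euclidean space = 'rV[R]_n with the
   standard inner product; topology = the canonical (product) topology on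
   matrices from matrix_normedtype. *)
From HB Require Import structures.
From mathcomp Require Import all_boot all_order all_algebra.
From mathcomp Require Import all_classical all_reals all_analysis.
Set Implicit Arguments. Unset Strict Implicit. Unset Printing Implicit Defensive.
Import Order.TTheory GRing.Theory Num.Theory.
Import numFieldNormedType.Exports.
Local Open Scope classical_set_scope.
Local Open Scope ring_scope.

Section Cones.
Variables (R : realType) (n : nat).
Notation V := 'rV[R]_n.

Definition inner (u v : V) : R := (u *m v^T) 0 0.

Definition is_cone (C : set V) : Prop :=
  forall x l, C x -> 0 <= l -> C (l *: x).

Definition convex_set (C : set V) : Prop :=
  forall x y (t : R), C x -> C y -> 0 <= t -> t <= 1 -> C (t *: x + (1 - t) *: y).

Definition pointed (C : set V) : Prop :=
  forall x, C x -> C (- x) -> x = 0.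

Definition regular_cone (C : set V) : Prop :=
  [/\ is_cone C, convex_set C, pointed C, closed C & (interior C) !=set0].

Definition ray (x : V) : set V := [set y | exists2 l : R, 0 <= l & y = l *: x].

Definition is_face (C F : set V) : Prop :=
  [/\ F `<=` C, convex_set F &
     forall x y (l : R), C x -> C y -> 0 < l -> l < 1 ->
       F (l *: x + (1 - l) *: y) -> F x /\ F y].

Definition extreme_ray (C r : set V) : Prop :=
  exists2 x : V, x != 0 & r = ray x /\ is_face C r.

Definition normal_cone (C : set V) (x : V) : set V :=
  [set y | forall z, C z -> inner y (z - x) <= 0].

Definition polar (C : set V) : set V :=
  [set y | forall x, C x -> inner x y <= 0].

(* dimension of (the linear span of) a set S: the maximal number of linearly
   independent vectors of S *)
Definition set_dim (S : set V) (k : nat) : Prop :=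
  (exists M : 'M[R]_(k, n), row_free M /\ forall i, S (row i M)) /\
  (forall M : 'M[R]_(k.+1, n), (forall i, S (row i M)) -> ~~ row_free M).

Definition boundary (C : set V) : set V := closure C `\` interior C.

Definition smooth_cone (C : set V) : Prop :=
  [/\ regular_cone C,
      (forall x, boundary C x -> exists2 r, extreme_ray C r & r x) &
      (forall r x, extreme_ray C r -> r x -> x != 0 -> set_dim (normal_cone C x) 1)].

End Cones.

(* Main.v *)
Require Import Defs.
From HB Require Import structures.
From mathcomp Require Import all_boot all_order all_algebra.
From mathcomp Require Import all_classical all_reals all_analysis.
From mathcomp Require Import ring lra zify.
Set Implicit Arguments. Unset Strict Implicit. Unset Printing Implicit Defensive.
Import Order.TTheory GRing.Theory Num.Theory.
Import numFieldNormedType.Exports.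
Local Open Scope classical_set_scope.
Local Open Scope ring_scope.
Section Basics.
Variables (R : realType) (n : nat).
Notation V := 'rV[R]_n.
Implicit Types (u v w x y z : V) (C : set V).

Lemma innerE u v : inner u v = \sum_i u 0 i * v 0 i.
Proof. by rewrite /inner mxE; apply: eq_bigr => i _; rewrite mxE. Qed.

Lemma innerC u v : inner u v = inner v u.
Proof. by rewrite !innerE; apply: eq_bigr => i _; rewrite mulrC. Qed.

Lemma innerDr u v w : inner u (v + w) = inner u v + inner u w.
Proof. by rewrite !innerE -big_split; apply: eq_bigr => i _; rewrite mxE mulrDr. Qed.

Lemma innerZr u v a : inner u (a *: v) = a * inner u v.
Proof. by rewrite !innerE mulr_sumr; apply: eq_bigr => i _; rewrite mxE mulrCA. Qed.

Lemma innerNr u v : inner u (- v) = - inner u v.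
Proof. by rewrite -scaleN1r innerZr mulN1r. Qed.

Lemma innerBr u v w : inner u (v - w) = inner u v - inner u w.
Proof. by rewrite innerDr innerNr. Qed.

Lemma inner0r u : inner u 0 = 0.
Proof. by rewrite -(scale0r 0) innerZr mul0r. Qed.

Lemma innerDl u v w : inner (v + w) u = inner v u + inner w u.
Proof. by rewrite !(innerC _ u) innerDr. Qed.
Lemma innerZl u v a : inner (a *: v) u = a * inner v u.
Proof. by rewrite !(innerC _ u) innerZr. Qed.
Lemma innerNl u v : inner (- v) u = - inner v u.
Proof. by rewrite !(innerC _ u) innerNr. Qed.
Lemma innerBl u v w : inner (v - w) u = inner v u - inner w u.
Proof. by rewrite !(innerC _ u) innerBr. Qed.
Lemma inner0l u : inner 0 u = 0.
Proof. by rewrite innerC inner0r. Qed.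

Lemma inner_ge0 u : 0 <= inner u u.
Proof. by rewrite innerE; apply: sumr_ge0 => i _; rewrite -expr2 sqr_ge0. Qed.

Lemma inner_eq0 u : inner u u = 0 -> u = 0.
Proof.
rewrite innerE => /eqP; rewrite psumr_eq0; last by move=> i _; rewrite -expr2 sqr_ge0.
move=> /allP H; apply/rowP => i; rewrite mxE.
by have := H i (mem_index_enum _); rewrite -expr2 sqrf_eq0 => /eqP.
Qed.

Lemma inner_gt0 u : u != 0 -> 0 < inner u u.
Proof.
move=> u0; rewrite lt_def inner_ge0 andbT; apply/eqP => /inner_eq0 /eqP.
by rewrite (negbTE u0).
Qed.

Lemma coord_le_norm u i : `|u 0 i| <= `|u|.
Proof.
rewrite [leRHS]/Num.norm /= mx_normrE; apply/bigmax_geP; right => /=.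
by exists (0, i).
Qed.

Lemma inner_bound u w : `|inner u w| <= n%:R * (`|u| * `|w|).
Proof.
rewrite innerE; apply: le_trans (ler_norm_sum _ _ _) _.
have -> : n%:R * (`|u| * `|w|) = \sum_(i < n) (`|u| * `|w|).
  by rewrite sumr_const card_ord mulr_natl.
apply: ler_sum => i _; rewrite normrM.
by apply: ler_pM => //; apply: coord_le_norm.
Qed.


Lemma interiorP (A : set V) x :
  interior A x <-> exists2 e, 0 < e & forall w, `|w| < e -> A (x + w).
Proof.
rewrite /interior; split.
  move=> /nbhs_ballP [e e0 H]; exists e => // w we; apply: H.
  by rewrite -ball_normE /ball_ /= opprD addrA subrr add0r normrN.
move=> [e e0 H]; apply/nbhs_ballP; exists e => // y.
rewrite -ball_normE /ball_ /= => hy.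
have -> : y = x + (y - x) by rewrite addrC subrK.
by apply: H; rewrite -normrN opprB.
Qed.

Lemma closureP (A : set V) x : closure A x ->
  forall e, 0 < e -> exists w, `|w| < e /\ A (x + w).
Proof.
move=> cl e e0.
have : nbhs x (ball x e) by apply/nbhs_ballP; exists e.
move=> /cl [y [Ay]]; rewrite -ball_normE /ball_ /= => hy.
exists (y - x); split; first by rewrite -normrN opprB.
by rewrite addrC subrK.
Qed.

Lemma continuous_sum_seq (T : topologicalType) (s : seq 'I_n) (g : 'I_n -> T -> R) :
  (forall i, continuous (g i)) -> continuous (fun t : T => \sum_(i <- s) g i t).
Proof.
move=> gc; elim: s => [|i s IH].
  by under eq_fun do rewrite big_nil; apply: cst_continuous.
under eq_fun do rewrite big_cons.
by move=> t; apply: continuousD; [apply: gc | apply: IH].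
Qed.

Lemma dist2_continuous p : continuous (fun x : V => inner (x - p) (x - p)).
Proof.
under eq_fun do rewrite innerE.
apply: continuous_sum_seq => i x.
have E : (fun x1 : V => (x1 - p) 0 i) = (fun x1 => x1 0 i + (- p 0 i)).
  by apply: funext => y; rewrite !mxE.
apply: continuousM => /=; rewrite E; apply: continuousD;
  (exact: coord_continuous || exact: cst_continuous).
Qed.

Lemma norm_sqr_le w : `|w| ^+ 2 <= inner w w.
Proof.
have [->|w0] := eqVneq w 0; first by rewrite normr0 expr0n /= inner0r.
have nw0 : mx_norm w != 0 by rewrite -[mx_norm w]/(`|w|) normr_eq0.
have [[i j] /= E] := mx_norm_neq0 nw0.
have -> : `|w| = `|w i j| by exact: E.
rewrite innerE (bigD1 j) //= -[X in X <= _]addr0 lerD //.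
  by rewrite (ord1 i) -normrX ger0_norm ?sqr_ge0 // expr2.
by apply: sumr_ge0 => k _; rewrite -expr2 sqr_ge0.
Qed.

Lemma aux_ge0 (a b : R) : 0 <= b ->
  (forall t, 0 < t -> t <= 1 -> 0 <= 2 * t * a + t ^+ 2 * b) -> 0 <= a.
Proof.
move=> b0 H; rewrite leNgt; apply/negP => a0.
have ba : 0 < b - a by lra.
have t0 : 0 < - a / (b - a) by rewrite divr_gt0 // oppr_gt0.
have t1 : - a / (b - a) <= 1 by rewrite ler_pdivrMr // mul1r; lra.
have h := H _ t0 t1.
have : 0 <= (2 * (- a / (b - a)) * a + (- a / (b - a)) ^+ 2 * b) * (b - a) ^+ 2.
  by rewrite mulr_ge0 // sqr_ge0.
have -> : (2 * (- a / (b - a)) * a + (- a / (b - a)) ^+ 2 * b) * (b - a) ^+ 2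
   = a * a * (b - 2 * a) * (- 1).
  by field; rewrite lt0r_neq0.
have : 0 < a * a * (b - 2 * a) by rewrite mulr_gt0 ?nmulr_rgt0 ?nmulr_lgt0 //; lra.
lra.
Qed.

Lemma norm_le_inner w : `|w| <= inner w w + 1.
Proof.
have := norm_sqr_le w; have : 0 <= `|w| by [].
move: (`|w|) => a a0 h.
have : a <= a ^+ 2 + 1 by rewrite expr2; nra.
lra.
Qed.

Lemma inner_expand u d t : inner (u + t *: d) (u + t *: d) =
  inner u u + 2 * t * inner u d + t ^+ 2 * inner d d.
Proof.
rewrite !innerDl !innerDr !innerZl !innerZr (innerC d u); ring.
Qed.

Lemma projection C p : closed C -> C !=set0 ->
  exists2 q, C q & forall z, Defs.convex_set C -> C z -> inner (p - q) (z - q) <= 0.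
Proof.
move=> Ccl [k0 Ck0].
pose f := fun x : V => inner (x - p) (x - p).
pose r := f k0 + 1.
pose A := closed_ball p r `&` C.
have r0 : 0 < r by rewrite /r; have := inner_ge0 (k0 - p); rewrite /f; lra.
have Ak0 : A k0.
  split => //; rewrite closed_ballE // /closed_ball_ /=.
  by rewrite -normrN opprB; apply: norm_le_inner.
have cA : compact A.
  apply: compact_closedI Ccl; apply: bounded_closed_compact; last exact: closed_ball_closed.
  exists (`|p| + r); split; first by rewrite num_real.
  move=> M HM x; rewrite closed_ballE // /closed_ball_ /= => hx.
  have -> : x = p - (p - x) by rewrite opprB addrC subrK.
  by apply: le_trans (ler_normB _ _) _; lra.
have fc : continuous f := @dist2_continuous p.
have [q qA qmin] := EVT_min_rV (ex_intro _ k0 Ak0) cA (continuous_subspaceT fc).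
rewrite inE in qA; case: qA => qB Cq.
have fq : forall z, C z -> f q <= f z.
  move=> z Cz; have [Bz|Bz] := pselect (closed_ball p r z).
    by apply: qmin; rewrite inE.
  have fk0 : f q <= f k0 by apply: qmin; rewrite inE.
  move: Bz; rewrite closed_ballE // /closed_ball_ /= => /negP; rewrite -ltNge => Bz.
  have := norm_sqr_le (z - p); rewrite -normrN opprB => h.
  have : r <= `|p - z| ^+ 2.
    rewrite expr2; apply: le_trans (ltW Bz) _.
    have ge := inner_ge0 (k0 - p); rewrite ler_peMl //; rewrite /r /f in Bz; lra.
  rewrite /r /f in fk0 * => hr; lra.
exists q => // z cvC Cz.
rewrite -[_ <= 0]oppr_ge0 -innerNl opprB.
apply: aux_ge0 (inner_ge0 (z - q)) _ => t t0 t1.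
have Cm := cvC z q t Cz Cq (ltW t0) t1.
have := fq _ Cm.
have -> : t *: z + (1 - t) *: q = q + t *: (z - q).
  by rewrite scalerBl scale1r scalerBr addrCA addrA.
rewrite /f.
have -> : q + t *: (z - q) - p = (q - p) + t *: (z - q) by rewrite addrAC.
rewrite inner_expand; rewrite /f in fq; lra.
Qed.

Lemma cone0 C : is_cone C -> C !=set0 -> C 0.
Proof. by move=> cC [x Cx]; rewrite -(scale0r x); apply: cC. Qed.

Lemma bipolar C : is_cone C -> Defs.convex_set C -> closed C -> C !=set0 ->
  forall p, polar (polar C) p -> C p.
Proof.
move=> cC cvC clC C0 p pp; apply: contrapT => nCp.
have [q Cq qH] := projection p clC C0.
have h0 := qH 0 cvC (cone0 cC C0).
have h2 : inner (p - q) (2 *: q - q) <= 0 by apply: qH => //; apply: cC.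
rewrite sub0r innerNr in h0.
have E2 : 2 *: q - q = q by rewrite scalerDl scale1r addrK.
rewrite E2 in h2.
have yP : polar C (p - q).
  move=> z Cz; rewrite innerC.
  have := qH z cvC Cz; rewrite innerBr; lra.
have := pp _ yP.
have -> : inner (p - q) p = inner (p - q) (p - q) + inner (p - q) q.
  by rewrite -innerDr subrK.
have : p - q != 0 by rewrite subr_eq0; apply/eqP => E; apply: nCp; rewrite E.
move=> /inner_gt0; lra.
Qed.

Lemma small_inner x a : 0 < a ->
  exists2 e, 0 < e & forall w, `|w| < e -> `|inner x w| < a.
Proof.
move=> a0; have d0 : 0 < n%:R * `|x| + 1 by rewrite ltr_wpDl ?mulr_ge0.
exists (a / (n%:R * `|x| + 1)); first by rewrite divr_gt0.
move=> w hw; apply: le_lt_trans (inner_bound x w) _.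
have hw' : `|w| * (n%:R * `|x| + 1) < a by rewrite -ltr_pdivlMr.
have E : n%:R * (`|x| * `|w|) = `|w| * (n%:R * `|x|) by rewrite mulrA mulrC.
rewrite E.
have : 0 <= n%:R * `|x| by rewrite mulr_ge0.
have : 0 <= `|w| by [].
move: hw'; move: (n%:R * `|x|) (`|w|) => A B h1 h2 h3; nra.
Qed.

Lemma interior_dir (A : set V) x v : interior A x -> exists2 s, 0 < s & A (x + s *: v).
Proof.
move=> /interiorP [e e0 H].
have d0 : 0 < `|v| + 1 by rewrite ltr_wpDl.
exists (e / 2 / (`|v| + 1)); first by rewrite !divr_gt0.
apply: H; rewrite normrZ ger0_norm ?divr_ge0 ?ltW //.
have ht : e / 2 / (`|v| + 1) * (`|v| + 1) = e / 2 by field; rewrite lt0r_neq0.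
have t0 : 0 <= e / 2 / (`|v| + 1) by rewrite ltW // !divr_gt0.
move: ht t0; move: (e / 2 / (`|v| + 1)) => t.
have : 0 <= `|v| by []; move: (`|v|) => b b0 ht t0; nra.
Qed.

Lemma polar_cone C : is_cone (polar C).
Proof. by move=> y l Py l0 x Cx; rewrite innerZr; apply: mulr_ge0_le0 => //; apply: Py. Qed.

Lemma polar_convex C : Defs.convex_set (polar C).
Proof.
move=> y1 y2 t P1 P2 t0 t1 x Cx; rewrite innerDr !innerZr.
have := P1 x Cx; have := P2 x Cx; nra.
Qed.

Lemma polar_closed C : closed (polar C).
Proof.
move=> y cly x Cx; rewrite leNgt; apply/negP => a0.
have [e e0 He] := small_inner x a0.
have [w [hw Pw]] := closureP cly e0.
have := Pw x Cx; rewrite innerDr.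
have := He w hw; rewrite ltr_norml => /andP[h1 h2]; lra.
Qed.

Lemma sum_in C x y : is_cone C -> Defs.convex_set C -> C x -> C y -> C (x + y).
Proof.
move=> cC cvC Cx Cy.
have h0 : 0 <= 1/2 :> R by lra.
have h1 : 1/2 <= 1 :> R by lra.
have H := cvC x y (1/2) Cx Cy h0 h1.
have -> : x + y = 2 *: ((1/2) *: x + (1 - 1/2) *: y).
  rewrite scalerDr !scalerA.
  have -> : 2 * (1/2) = 1 :> R by field.
  have -> : 2 * (1 - 1/2) = 1 :> R by field.
  by rewrite !scale1r.
by apply: cC.
Qed.

Lemma interior_pointed C : interior C !=set0 ->
  forall y, (forall x, C x -> inner x y = 0) -> y = 0.
Proof.
move=> [x0 ix0] y H.
have [s s0 Cs] := interior_dir y ix0.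
have := H _ Cs; rewrite innerDl innerZl (H _ _); last first.
  by move: ix0 => /interiorP [e e0 /(_ 0)]; rewrite normr0 addr0; apply.
rewrite add0r => /eqP; rewrite mulf_eq0 (gt_eqF s0) /= => /eqP; exact: inner_eq0.
Qed.

Lemma ker_row_free k m (A : 'M[R]_(k, m)) :
  (forall b : 'rV_k, b *m A = 0 -> b = 0) -> row_free A.
Proof.
move=> H; rewrite -kermx_eq0; apply/eqP/row_matrixP => i.
by rewrite row0; apply: H; rewrite -row_mul mulmx_ker row0.
Qed.

Lemma not_row_free_ker k m (A : 'M[R]_(k, m)) :
  ~~ row_free A -> exists2 b : 'rV_k, b != 0 & b *m A = 0.
Proof.
rewrite -kermx_eq0 => /eqP H.
have [i Hi] : exists i, row i (kermx A) != 0.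
  apply: contrapT => H'; apply: H; apply/row_matrixP => i; rewrite row0.
  by apply/eqP/negPn/negP => Hi; apply: H'; exists i.
by exists (row i (kermx A)) => //; rewrite -row_mul mulmx_ker row0.
Qed.

Lemma exists_normal k (M : 'M[R]_(k, n)) : (k < n)%N ->
  exists2 h : V, h != 0 & M *m h^T = 0.
Proof.
move=> kn.
have : ~~ row_free M^T.
  rewrite /row_free; apply/negP => /eqP E.
  by move: (rank_leq_col M^T); rewrite E; lia.
move=> /not_row_free_ker [h h0 hM]; exists h => //.
by rewrite -(trmxK M) -trmx_mul hM trmx0.
Qed.


Lemma max_rank (P : set V) : (forall h : V, h != 0 -> exists2 y, P y & inner h y != 0) ->
  forall k, (k <= n)%N -> exists M : 'M[R]_(k, n), row_free M /\ forall i, P (row i M).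
Proof.
move=> HP; elim=> [_|k IH kn].
  exists 0; split; last by case.
  by apply: ker_row_free => b _; apply/rowP => -[].
have [M [Mf MP]] := IH (ltnW kn).
have [h h0 hM] := exists_normal M kn.
have [y Py hy] := HP h h0.
pose M' : 'M[R]_(1 + k, n) := col_mx y M.
exists M'; split.
  apply: (@ker_row_free (1 + k)) => b; rewrite /M' -(hsubmxK b) mul_row_col => E.
  have E1 : lsubmx b *m (y *m h^T) = 0.
    have := congr1 (fun X => X *m h^T) E; rewrite /= mulmxDl mul0mx -!mulmxA hM mulmx0 addr0.
    by [].
  have yh : y *m h^T = (inner y h)%:M by rewrite [LHS]mx11_scalar.
  rewrite yh mul_mx_scalar in E1.
  have b1 : lsubmx b = 0.
    by move: E1 => /eqP; rewrite scaler_eq0 innerC (negbTE hy) /= => /eqP.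
  rewrite b1 mul0mx add0r in E.
  have b2 : rsubmx b = 0 by apply: (row_free_inj Mf); rewrite E mul0mx.
  by rewrite b1 b2 row_mx0.
rewrite /M'; change (forall i : 'I_(1 + k), P (row i (col_mx y M))).
move=> i; rewrite -[i]splitK; case: (fintype.split i) => j /=.
  rewrite rowKu; have -> : row j y = y by apply/rowP => l; rewrite mxE (ord1 j).
  by [].
by rewrite rowKd.
Qed.

Lemma small_real (K b a : R) : 0 <= K -> 0 <= b -> b < a / (K + 1) -> K * b < a.
Proof.
move=> K0 b0; rewrite ltr_pdivlMr ?ltr_wpDl // => h; nra.
Qed.

Lemma entry_le_norm k m (A : 'M[R]_(k, m)) i j : `|A i j| <= `|A|.
Proof.
rewrite [leRHS]/Num.norm /= mx_normrE; apply/bigmax_geP; right => /=.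
by exists (i, j).
Qed.

Lemma mulmx_bound m (w : V) (A : 'M[R]_(n, m)) i :
  `|(w *m A) 0 i| <= n%:R * (`|w| * `|A|).
Proof.
rewrite mxE; apply: le_trans (ler_norm_sum _ _ _) _.
have -> : n%:R * (`|w| * `|A|) = \sum_(j < n) (`|w| * `|A|).
  by rewrite sumr_const card_ord mulr_natl.
apply: ler_sum => j _; rewrite normrM.
by apply: ler_pM => //; [apply: coord_le_norm | apply: entry_le_norm].
Qed.

Lemma comb_in (P : set V) k (c : 'rV[R]_k) (M : 'M[R]_(k, n)) :
  is_cone P -> Defs.convex_set P -> P 0 -> (forall i, 0 <= c 0 i) ->
  (forall i, P (row i M)) -> P (c *m M).
Proof.
move=> cP cvP P0 c0 MP; rewrite mulmx_sum_row.
apply: big_ind => //; first by move=> x y; apply: sum_in.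
by move=> i _; apply: cP.
Qed.

Lemma full_rank_interior (P : set V) (M : 'M[R]_n) :
  is_cone P -> Defs.convex_set P -> P 0 -> row_free M ->
  (forall i, P (row i M)) -> interior P !=set0.
Proof.
move=> cP cvP P0 Mf MP.
have Mu : M \in unitmx by rewrite -row_free_unit.
set A := invmx M.
exists (const_mx 1 *m M); apply/interiorP.
exists (1 / (n%:R * `|A| + 1)); first by rewrite divr_gt0 // ltr_wpDl ?mulr_ge0.
move=> w hw.
have -> : const_mx 1 *m M + w = (const_mx 1 + w *m A) *m M.
  by rewrite mulmxDl mulmxKV.
apply: comb_in => // i.
have -> : (const_mx 1 + w *m A) 0 i = 1 + (w *m A) 0 i by rewrite mxE [const_mx 1 0 i]mxE.
have := mulmx_bound w A i.
have : n%:R * `|A| * `|w| < 1 by apply: small_real; rewrite ?mulr_ge0.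
rewrite -mulrA (mulrC `|A|) => h1 h2.
have := ler_norm (- (w *m A) 0 i); rewrite normrN; lra.
Qed.

Lemma inner_continuous y : continuous (fun x : V => inner x y).
Proof.
under eq_fun do rewrite innerE.
apply: continuous_sum_seq => i x.
apply: continuousM => /=; [exact: coord_continuous | exact: cst_continuous].
Qed.

Lemma normalize_cone C x : is_cone C -> C x -> x != 0 ->
  C (`|x|^-1 *: x) /\ Num.norm (`|x|^-1 *: x) = 1.
Proof.
move=> cC Cx x0; split; first by apply: cC; rewrite // invr_ge0.
by rewrite normrZ normrV ?unitfE ?normr_eq0 // normr_id mulVf // normr_eq0.
Qed.

Lemma strict_interior C y : is_cone C -> closed C ->
  (forall x, C x -> x != 0 -> inner x y < 0) -> interior (polar C) y.
Proof.
move=> cC clC H.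
pose S := C `&` [set x : V | `|x| = 1].
have [[c0 Sc0]|S0] := pselect (S !=set0); last first.
  apply/interiorP; exists 1 => // w _ x Cx.
  have [->|x0] := eqVneq x 0; first by rewrite inner0l.
  by exfalso; apply: S0; exists (`|x|^-1 *: x); apply: normalize_cone.
have clS : closed S.
  apply: closedI => //.
  have hh := ((continuous_closedP (fun x : V => `|x|)).1 (@norm_continuous _ V) [set r : R | r = 1] (@closed_eq R 1)).
  exact hh.
have cS : compact S.
  apply: bounded_closed_compact => //.
  exists 1; split; first by rewrite num_real.
  by move=> M HM x [_ /= ->]; apply: ltW.
have [c Sc cmax] := EVT_max_rV (ex_intro _ c0 Sc0) cS (continuous_subspaceT (@inner_continuous y)).
rewrite inE in Sc; case: Sc => Cc /= nc.
have c0' : c != 0 by apply/eqP => E; move: nc; rewrite E normr0 => /eqP; rewrite eq_sym oner_eq0.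
set d := - inner c y.
have d0 : 0 < d by rewrite /d oppr_gt0; apply: H.
have Hx : forall x, C x -> inner x y <= - d * `|x|.
  move=> x Cx; have [->|x0] := eqVneq x 0; first by rewrite inner0l normr0 mulr0.
  have [Cx' nx'] := normalize_cone cC Cx x0.
  have := cmax (`|x|^-1 *: x); rewrite inE => /(_ (conj Cx' nx')).
  rewrite innerZl /d opprK => h.
  have nx : `|x| != 0 by rewrite normr_eq0.
  rewrite -[inner x y](mulVKf nx) (mulrC _ `|x|).
  by apply: ler_wpM2l.
apply/interiorP; exists (d / (n%:R + 1)); first by rewrite divr_gt0 // ltr_wpDl.
move=> w hw x Cx; rewrite innerDr.
have h1 := Hx x Cx.
have h2 := inner_bound x w.
have h3 : n%:R * `|w| < d by apply: small_real.
have h4 : 0 <= `|x| by [].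
have := ler_norm (inner x w).
move: h1 h2 h3 h4; move: (inner x y) (inner x w) (`|x|) (`|w|) (n%:R : R) => a b X W N.
nra.
Qed.

Lemma normal_coneE K x y : is_cone K -> Defs.convex_set K -> K x ->
  normal_cone K x y <-> polar K y /\ inner y x = 0.
Proof.
move=> cK cvK Kx; split.
  move=> N.
  have h0 := N 0 (cone0 cK (ex_intro _ x Kx)).
  have h2 := N (2 *: x) (cK _ _ Kx (ler0n _ 2)).
  rewrite sub0r innerNr in h0.
  have E2 : 2 *: x - x = x by rewrite scalerDl scale1r addrK.
  rewrite E2 in h2.
  split; last by apply/eqP; rewrite eq_le h2 -oppr_le0.
  move=> z Kz; have := N (x + z) (sum_in cK cvK Kx Kz).
  by rewrite addrAC subrr add0r innerC.
move=> [Py yx] z Kz; rewrite innerBr yx subr0 innerC; exact: Py.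
Qed.

Lemma dim1_of_line (S : set V) v : v != 0 -> S v ->
  (forall a, S a -> exists t, a = t *: v) -> set_dim S 1.
Proof.
move=> v0 Sv H; split.
  exists v; split; last by move=> i; rewrite (_ : row i v = v) //; apply/rowP => j; rewrite mxE (ord1 i).
  apply: ker_row_free => b; rewrite [b]mx11_scalar mul_scalar_mx => /eqP.
  rewrite scaler_eq0 (negbTE v0) orbF => /eqP ->.
  by apply/rowP => i; rewrite !mxE (ord1 i).
move=> M MS; apply/negP => Mf.
have [t0 E0] := H _ (MS 0); have [t1 E1] := H _ (MS 1).
pose b : 'rV[R]_2 := if t0 == 0 then \row_(j < 2) (if j == 0 then 1 else 0)
   else \row_(j < 2) (if j == 0 then t1 else - t0).
have bM : b *m M = 0.
  rewrite mulmx_sum_row !big_ord_recl big_ord0 addr0 /b.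
  have -> : lift ord0 ord0 = 1 :> 'I_2 by apply/val_inj.
  rewrite E0 E1; case: eqP => [->|_]; rewrite !mxE /=.
    by rewrite !scale1r !scale0r addr0.
  by rewrite !scalerA mulrC -scalerDl addrC mulNr addNr scale0r.
have b0 : b != 0.
  rewrite /b; case t00 : (t0 == 0).
    apply/eqP => E; have := congr1 (fun M : 'rV[R]_2 => M 0 0) E.
    by rewrite !mxE /= => /eqP; rewrite oner_eq0.
  apply/eqP => E; have := congr1 (fun M : 'rV[R]_2 => M 0 1) E.
  by rewrite !mxE /= => /eqP; rewrite oppr_eq0 t00.
have bM' : b *m M = 0 *m M by rewrite mul0mx.
by move: b0; rewrite (row_free_inj Mf bM') eqxx.
Qed.

Lemma rV1_scale (b : 'rV[R]_1) (a : V) : b *m a = b 0 0 *: a.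
Proof. by rewrite [b]mx11_scalar mul_scalar_mx mxE eqxx mulr1n. Qed.

Lemma dim1_line (S : set V) : set_dim S 1 ->
  (exists2 v, v != 0 & S v) /\
  (forall v a, S v -> v != 0 -> S a -> exists t, a = t *: v).
Proof.
move=> [[M [Mf MS]] H2]; split.
  exists (row 0 M); last exact: MS.
  apply/eqP => E; move: Mf; rewrite /row_free.
  have -> : M = 0 by apply/matrixP => i j; rewrite (ord1 i) -(row_id 0 M) E !mxE.
  by rewrite mxrank0.
move=> v a Sv v0 Sa.
pose M2 : 'M[R]_(1 + 1, n) := col_mx a v.
have HS : forall i, S (row i M2).
  rewrite /M2; change (forall i : 'I_(1 + 1), S (row i (col_mx a v))).
  move=> i; rewrite -[i]splitK; case: (fintype.split i) => j /=.
    by rewrite rowKu; have -> : row j a = a by apply/rowP => l; rewrite mxE (ord1 j).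
  by rewrite rowKd; have -> : row j v = v by apply/rowP => l; rewrite mxE (ord1 j).
have [b b0] := @not_row_free_ker (1 + 1) n M2 (H2 M2 HS).
rewrite /M2 -(hsubmxK b) mul_row_col !rV1_scale.
set b1 := lsubmx b 0 0; set b2 := rsubmx b 0 0 => E.
have [b10|b10] := eqVneq b1 0.
  move: E; rewrite b10 scale0r add0r => /eqP; rewrite scaler_eq0 (negbTE v0) orbF => /eqP b20.
  exfalso; move: b0; rewrite -(hsubmxK b).
  have -> : lsubmx b = 0 by apply/rowP => i; rewrite (ord1 i) [RHS]mxE; exact: b10.
  have -> : rsubmx b = 0 by apply/rowP => i; rewrite (ord1 i) [RHS]mxE; exact: b20.
  by rewrite row_mx0 eqxx.
exists (- b2 / b1).
apply: (scalerI b10); rewrite scalerA.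
have -> : b1 * (- b2 / b1) = - b2 by field.
by apply/eqP; rewrite scaleNr -subr_eq0 opprK E.
Qed.

Lemma ray_of_line (K : set V) y a t : pointed K -> is_cone K -> K y -> y != 0 ->
  K a -> a = t *: y -> ray y a.
Proof.
move=> pK cK Ky y0 Ka Ea.
have [t0|t0] := leP 0 t; first by exists t.
exfalso; move/eqP: y0; apply; apply: pK => //.
have := cK a (- t)^-1 Ka; rewrite invr_ge0 oppr_ge0 (ltW t0) => /(_ isT).
rewrite Ea scalerA mulrC invrN mulrN mulfV ?scaleN1r //.
by rewrite lt_eqF.
Qed.

Lemma ray_cone y : is_cone (ray y).
Proof. by move=> a l [t t0 ->] l0; exists (l * t); rewrite ?mulr_ge0 ?scalerA. Qed.

Lemma ray_convex y : Defs.convex_set (ray y).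
Proof.
move=> a b t [s s0 ->] [r r0 ->] t0 t1; exists (t * s + (1 - t) * r).
  by apply: addr_ge0; apply: mulr_ge0 => //; lra.
by rewrite !scalerA scalerDl.
Qed.

Lemma NC_ray C x y : is_cone C -> Defs.convex_set C -> pointed (polar C) -> C x ->
  set_dim (normal_cone C x) 1 -> normal_cone C x y -> y != 0 ->
  forall a, normal_cone C x a <-> ray y a.
Proof.
move=> cC cvC pP Cx hd Ny y0 a.
have [_ Hl] := dim1_line hd.
have [Py yx] := (normal_coneE y cC cvC Cx).1 Ny.
split.
  move=> Na; have [t Et] := Hl _ _ Ny y0 Na.
  have [Pa _] := (normal_coneE a cC cvC Cx).1 Na.
  exact: ray_of_line pP (@polar_cone C) Py y0 Pa Et.
move=> [t t0 ->]; apply/(normal_coneE _ cC cvC Cx); split.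
  by apply: polar_cone.
by rewrite innerZl yx mulr0.
Qed.

Lemma ER C x y : is_cone C -> Defs.convex_set C -> pointed (polar C) -> C x ->
  set_dim (normal_cone C x) 1 -> normal_cone C x y -> y != 0 ->
  extreme_ray (polar C) (ray y).
Proof.
move=> cC cvC pP Cx hd Ny y0.
have HR := NC_ray cC cvC pP Cx hd Ny y0.
exists y => //; split => //; split.
- move=> a /HR Na; exact: ((normal_coneE a cC cvC Cx).1 Na).1.
- exact: ray_convex.
- move=> a b l Pa Pb l0 l1 /HR /(normal_coneE _ cC cvC Cx) [_].
  rewrite innerDl !innerZl => E.
  have ha := Pa x Cx; have hb := Pb x Cx.
  rewrite (innerC x) in ha; rewrite (innerC x) in hb.
  have ha0 : inner a x = 0 by nra.
  have hb0 : inner b x = 0 by nra.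
  by split; apply/HR/(normal_coneE _ cC cvC Cx).
Qed.

Lemma not_int_witness C y : is_cone C -> closed C -> polar C y ->
  ~ interior (polar C) y -> exists x, [/\ C x, x != 0 & inner x y = 0].
Proof.
move=> cC clC Py ni; apply: contrapT => H; apply: ni.
apply: strict_interior => // x Cx x0.
rewrite lt_def (Py x Cx) andbT; apply/eqP => E; apply: H; by exists x.
Qed.

Lemma interior_dir2 (A : set V) x v : interior A x ->
  exists2 s, 0 < s & A (x + s *: v) /\ A (x - s *: v).
Proof.
move=> /interiorP [e e0 H].
have d0 : 0 < `|v| + 1 by rewrite ltr_wpDl.
have sm : `|(e / 2 / (`|v| + 1)) *: v| < e.
  rewrite normrZ ger0_norm ?divr_ge0 ?ltW //.
  have ht : e / 2 / (`|v| + 1) * (`|v| + 1) = e / 2 by field; rewrite lt0r_neq0.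
  have t0 : 0 <= e / 2 / (`|v| + 1) by rewrite ltW // !divr_gt0.
  move: ht t0; move: (e / 2 / (`|v| + 1)) => t.
  have : 0 <= `|v| by []; move: (`|v|) => b b0 ht t0; nra.
exists (e / 2 / (`|v| + 1)); first by rewrite !divr_gt0.
by split; apply: H; rewrite ?normrN.
Qed.

Lemma interior_sub (A : set V) x : interior A x -> A x.
Proof. by move=> /interiorP [e e0 /(_ 0)]; rewrite normr0 addr0; apply. Qed.

Lemma main_thm C : smooth_cone C -> smooth_cone (polar C).
Proof.
move=> [[cC cvC pC clC [x0 ix0]] BC NC].
have C0 : C !=set0 by exists x0; apply: interior_sub.
set P := polar C.
have PP : forall x, polar P x <-> C x.
  move=> x; split; first exact: bipolar.
  by move=> Cx y Py; rewrite innerC; apply: Py.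
have cP : is_cone P := @polar_cone C.
have cvP : Defs.convex_set P := @polar_convex C.
have P0 : P 0 by move=> x _; rewrite inner0r.
have pP : pointed P.
  move=> y Py Pny; apply: (interior_pointed (ex_intro _ x0 ix0)) => x Cx.
  have := Py x Cx; have := Pny x Cx; rewrite innerNr; lra.
have iP : interior P !=set0.
  have HP : forall h : V, h != 0 -> exists2 y, P y & inner h y != 0.
    move=> h h0; apply: contrapT => H.
    have Hh : forall y, P y -> inner y h = 0.
      move=> y Py; rewrite innerC; apply/eqP; apply: contrapT => /negP hy.
      by apply: H; exists y.
    move/eqP: h0; apply; apply: pC; apply/PP => y Py; rewrite ?innerNr Hh // ?oppr0.
  have [M [Mf MP]] := max_rank HP (leqnn n).
  exact: full_rank_interior cP cvP P0 Mf MP.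
have notint : forall x y, C x -> P y -> y != 0 -> inner x y = 0 -> ~ interior C x.
  move=> x y Cx Py y0 xy ix.
  have [s s0 Cs] := interior_dir y ix.
  have := Py _ Cs; rewrite innerDl innerZl xy add0r.
  have := inner_gt0 y0; rewrite pmulr_rle0 //; lra.
have ex_ray0 : ~ interior C 0 -> exists x1 y1,
    [/\ C x1, x1 != 0, set_dim (normal_cone C x1) 1, normal_cone C x1 y1 & y1 != 0].
  move=> ni0.
  have bd : boundary C 0 by split => //; apply: subset_closure; apply: cone0.
  have [r er r0] := BC 0 bd; have [x1 x10 [Er [rsub _ _]]] := er.
  have rx1 : r x1 by rewrite Er; exists 1; rewrite ?scale1r.
  have hd := NC r x1 er rx1 x10.
  have [[y1 y10 Ny1] _] := dim1_line hd.
  by exists x1, y1; split => //; apply: rsub.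
split; first split => //; first exact: polar_closed.
- move=> y [cly niy].
  have Py : P y by apply: polar_closed.
  have [y00|y0] := eqVneq y 0.
    subst y.
    have ni0 : ~ interior C 0.
      move=> i0; apply: niy; have [z iz] := iP.
      have Pz := interior_sub iz.
      have z0 : z = 0.
        apply/eqP; apply: contrapT => /negP z0.
        by apply: (notint 0 z) => //; [apply: cone0 | rewrite inner0l].
      by move: iz; rewrite z0.
    have [x1 [y1 [Cx1 x10 hd Ny1 y10]]] := ex_ray0 ni0.
    exists (ray y1); first exact: ER cC cvC pP Cx1 hd Ny1 y10.
    by exists 0; rewrite ?scale0r.
  have [x [Cx x0' xy]] := not_int_witness cC clC Py niy.
  have bx : boundary C x by split; [apply: subset_closure | apply: notint xy].
  have [r er rx] := BC x bx.
  have hd := NC r x er rx x0'.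
  have Ny : normal_cone C x y by apply/(normal_coneE y cC cvC Cx); rewrite innerC.
  exists (ray y); first exact: ER cC cvC pP Cx hd Ny y0.
  by exists 1; rewrite ?scale1r.
- move=> r y er ry y0.
  have [y0' y00 [Er [rsub rcv rface]]] := er.
  have Py : P y by apply: rsub.
  have niy : ~ interior P y.
    move=> iy.
    have Hv : forall v, exists t, v = t *: y0'.
      move=> v; have [s s0 [Pp Pm]] := interior_dir2 v iy.
      have hf := rface _ _ (1/2) Pp Pm.
      have E : 1 / 2 *: (y + s *: v) + (1 - 1 / 2) *: (y - s *: v) = y.
        by apply/rowP => i; rewrite !mxE; field.
      have h1 : 0 < 1/2 :> R by lra.
      have h2 : 1/2 < 1 :> R by lra.
      have [rp _] := hf h1 h2 (eq_ind_r r ry E).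
      rewrite Er in rp ry; case: rp => t _ Et; case: ry => l _ El.
      exists (s^-1 * (t - l)).
      apply: (scalerI (lt0r_neq0 s0)); rewrite scalerA mulrA mulfV ?lt0r_neq0 // mul1r.
      by rewrite scalerBl -Et -El addrC addKr.
    have ni0 : ~ interior C 0.
      by apply: (notint 0 y) => //; [apply: cone0 | rewrite inner0l].
    have [x1 [y1 [Cx1 x10 hd Ny1 y10]]] := ex_ray0 ni0.
    have [_ yx] := (normal_coneE y1 cC cvC Cx1).1 Ny1.
    have [a Ea] := Hv x1; have [b Eb] := Hv y1.
    move: yx; rewrite Ea Eb innerZl innerZr => /eqP.
    have a0 : a != 0 by apply: contraNneq x10 => a0; rewrite Ea a0 scale0r.
    have b0 : b != 0 by apply: contraNneq y10 => b0; rewrite Eb b0 scale0r.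
    by rewrite !mulf_eq0 (negbTE a0) (negbTE b0) (gt_eqF (inner_gt0 y00)).
  have [x [Cx x0' xy]] := not_int_witness cC clC Py niy.
  apply: (@dim1_of_line _ x x0').
    by apply: (proj2 (normal_coneE x cP cvP Py)); split; [exact/PP | exact: xy].
  move=> a /(proj1 (normal_coneE a cP cvP Py)) [/PP Ca ay].
  have Cm : C (x + a) by apply: sum_in.
  have ni : ~ interior C (x + a) by apply: (notint _ y) => //; rewrite innerDl xy ay addr0.
  have [r' er' rm] := BC (x + a) (conj (subset_closure Cm) ni).
  have [m0 m00 [Er' [_ _ rface']]] := er'.
  have h1 : 0 < 1/2 :> R by lra.
  have h2 : 1/2 < 1 :> R by lra.
  have C2x : C (2 *: x) by apply: cC.
  have C2a : C (2 *: a) by apply: cC.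
  have E : 1 / 2 *: (2 *: x) + (1 - 1 / 2) *: (2 *: a) = x + a.
    by apply/rowP => i; rewrite !mxE; field.
  have [rx ra] := rface' _ _ _ C2x C2a h1 h2 (eq_ind_r r' rm E).
  rewrite Er' in rx ra; case: rx => al _ Eal; case: ra => be _ Ebe.
  have two : (2:R) != 0 by rewrite pnatr_eq0.
  have al0 : al != 0.
    apply: contraNneq x0' => al0.
    have : 2 *: x = 0 by rewrite Eal al0 scale0r.
    by move/eqP; rewrite scaler_eq0 (negbTE two).
  exists (be / al).
  apply: (scalerI two).
  by rewrite Ebe scalerA (mulrC 2) -scalerA Eal scalerA divfK.
Qed.


End Basics.

Theorem corollary1 (R : realType) (n : nat) (C : set 'rV[R]_n) :
  smooth_cone C -> smooth_cone (polar C).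
Proof. exact: main_thm. Qed.
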